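(* Let $F$ be a family, $w$ a function from elements to $\mathbb{N}$ with $w(a)>0$ for some $a\in\bigcup F$, and $K,S$ sets with $K\cup S=\bigcup F$ and $K\cap S=\emptyset$. If $\mathrm{hs}(K',S,F,w,\bigcup F)\ge 0$ for every $K'\subseteq K$, then $F$ is Frankl's.
   Context: All sets and families are finite. $F$ is Frankl's if there is $a \in \bigcup F$ with $2\cdot|\{A\in F: a\in A\}| \ge |F|$. $\mathrm{sw}(w,A)=\sum_{a\in A}w(a)$; $\mathrm{ss}(A,w,X)=2\,\mathrm{sw}(w,A)-\mathrm{sw}(w,X)\in\mathbb{Z}$. The $S$-hypercube with base $K$ is $H(K,S)=\{A : K\subseteq A\subseteq K\cup S\}$. The hyper-share is $\mathrm{hs}(K,S,F,w,X)=\sum_{A\in H(K,S)\cap F}\mathrm{ss}(A,w,X)$. *)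

(* Defs.v *)
From HB Require Import structures.
From mathcomp Require Import all_boot all_order all_algebra.
Set Implicit Arguments. Unset Strict Implicit. Unset Printing Implicit Defensive.
Import Order.TTheory GRing.Theory Num.Theory.

Definition Ufam (T : finType) (F : {set {set T}}) : {set T} := \bigcup_(A in F) A.

Definition frankl (T : finType) (F : {set {set T}}) : Prop :=
  exists2 a, a \in Ufam F & (#|F| <= 2 * #|[set A in F | a \in A]|)%N.

Definition sw (T : finType) (w : T -> nat) (A : {set T}) : nat := (\sum_(a in A) w a)%N.

Definition ss (T : finType) (A : {set T}) (w : T -> nat) (X : {set T}) : int :=
  ((2 * sw w A)%N%:Z - (sw w X)%:Z)%R.

Definition hcube (T : finType) (K S : {set T}) : {set {set T}} :=
  [set A : {set T} | K \subset A & A \subset K :|: S].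

Definition hs (T : finType) (K S : {set T}) (F : {set {set T}}) (w : T -> nat)
  (X : {set T}) : int :=
  (\sum_(A in hcube K S :&: F) ss A w X)%R.

(* Main.v *)
Require Import Defs.
From HB Require Import structures.
From mathcomp Require Import all_boot all_order all_algebra.
Import Order.TTheory GRing.Theory Num.Theory.

Lemma part_eq (T : finType) (F : {set {set T}}) (K S K' A : {set T}) :
  K :|: S = Ufam F -> K :&: S = set0 -> K' \subset K ->
  (A \in F) && (A :&: K == K') = (A \in hcube K' S :&: F).
Proof.
move=> hU hI hK'.
rewrite inE [RHS]andbC inE.
case AF: (A \in F) => //=.
have AU : A \subset K :|: S by rewrite hU; exact: bigcup_sup.
apply/idP/idP.
- move/eqP=> <-; rewrite subsetIl /=.
  apply/subsetP=> x xA; rewrite !inE xA /=.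
  by move/subsetP: AU => /(_ x xA); rewrite inE.
- case/andP=> s1 s2; rewrite eqEsubset; apply/andP; split.
  + apply/subsetP=> x; rewrite inE => /andP[xA xK].
    move/subsetP: s2 => /(_ x xA); rewrite inE => /orP[//|xS].
    have : x \in K :&: S by rewrite inE xK xS.
    by rewrite hI inE.
  + by rewrite subsetI s1 hK'.
Qed.

Theorem lemma3 (T : finType) (F : {set {set T}}) (w : T -> nat)
  (K S : {set T}) :
  (exists2 a, a \in Ufam F & (0 < w a)%N) ->
  K :|: S = Ufam F ->
  K :&: S = set0 ->
  (forall K' : {set T}, K' \subset K -> (0 <= hs K' S F w (Ufam F))%R) ->
  frankl F.
Proof.
move=> [a0 a0U wa0] hU hI hhs.
set U := Ufam F.
set deg := fun a => #|[set A in F | a \in A]|.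
have H1 : (0 <= \sum_(A in F) ss A w U)%R.
  rewrite (partition_big (fun A => A :&: K) (fun K' => K' \subset K)); last first.
    by move=> A _; rewrite subsetIr.
  apply: sumr_ge0 => K' hK'.
  have -> : (\sum_(A in F | A :&: K == K') ss A w U
       = hs K' S F w U)%R.
    by rewrite /hs; apply: eq_bigl => A; rewrite (@part_eq _ F K S K' A hU hI hK').
  exact: hhs.
have H2 : (#|F| * sw w U <= 2 * \sum_(A in F) sw w A)%N.
  move: H1; rewrite /ss sumrB.
  have e : forall (I : finType) (P : pred I) (f : I -> nat),
      (\sum_(i in P) (Posz (f i)))%R = Posz (\sum_(i in P) f i)%N.
    by move=> I P f; rewrite (big_morph Posz PoszD (erefl _)).
  have pm : forall m n : nat, (Posz m *+ n = Posz (m * n)%N)%R.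
    by move=> m n; elim: n => [|n IH]; rewrite ?mulrS ?IH ?muln0 // mulnS PoszD.
  rewrite e sumr_const pm subr_ge0 lez_nat => h.
  by rewrite mulnC big_distrr.
have H3 : (\sum_(A in F) sw w A = \sum_a deg a * w a)%N.
  rewrite /sw.
  under eq_bigr do rewrite big_mkcond /=.
  rewrite exchange_big /=; apply: eq_bigr => a _.
  rewrite /deg -sum1_card big_distrl /= big_mkcond /=.
  rewrite [in RHS](big_mkcond (fun A => A \in _)) /=; apply: eq_bigr => A _.
  by rewrite inE; case: (A \in F); case: (a \in A); rewrite ?mul1n.
case: (boolP [exists a, (a \in U) && (#|F| <= 2 * deg a)%N]).
  by case/existsP=> a /andP[aU ha]; exists a.
move/existsPn=> hn; exfalso.
have hlt : forall a, a \in U -> (2 * deg a < #|F|)%N.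
  by move=> a aU; move: (hn a); rewrite aU /= ltnNge.
have h0 : forall a, a \notin U -> deg a = 0%N.
  move=> a aU; apply/eqP; rewrite cards_eq0; apply/eqP/setP=> A.
  rewrite !inE; apply/negbTE/andP=> [[AF aA]]; move/negP: aU; apply.
  by apply/bigcupP; exists A.
have hle : forall a, (2 * deg a * w a <= (a \in U) * #|F| * w a)%N.
  move=> a; case aU: (a \in U).
    by rewrite mul1n leq_mul2r ltnW ?orbT // hlt.
  by rewrite h0 ?aU // muln0.
have hs : (\sum_a 2 * deg a * w a < \sum_a (a \in U) * #|F| * w a)%N.
  rewrite (bigD1 a0) //= [X in (_ < X)%N](bigD1 a0) //=.
  rewrite -addSn leq_add ?leq_sum // a0U mul1n ltn_mul2r wa0 /=.
  exact: hlt.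
have hsU : (\sum_a (a \in U) * #|F| * w a = #|F| * sw w U)%N.
  rewrite /sw big_distrr /= [in RHS]big_mkcond /=; apply: eq_bigr => a _.
  by case: (a \in U); rewrite ?mul1n ?mul0n.
move: H2; rewrite H3 [X in (_ <= X)%N -> _]big_distrr /=.
under [X in (_ <= X)%N -> _]eq_bigr do rewrite mulnA.
by rewrite leqNgt -hsU hs.
Qed.
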